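(* Let $\mathbf{A}\in\mathbb{C}^{M\times N_a}$, $\mathbf{B}\in\mathbb{C}^{M\times N_b}$ have unit-$\ell_2$-norm columns with coherence parameters $\mu_a,\mu_b,\mu_m$. Let $\mathcal{E}\subseteq\{1,\dots,N_b\}$, $|\mathcal{E}|=n_e$, with $1-\mu_b(n_e-1)>0$, let $\mathbf{R}_{\mathcal{E}}=\mathbf{I}_M-\mathbf{B}_{\mathcal{E}}\mathbf{B}_{\mathcal{E}}^\dagger$ and let $\tilde{\mathbf{a}}_i=\mathbf{R}_{\mathcal{E}}\mathbf{a}_i$ be the columns of $\mathbf{R}_{\mathcal{E}}\mathbf{A}$. Then for all $i\ne j$ $$|\tilde{\mathbf{a}}_i^H\tilde{\mathbf{a}}_j|\le\mu_a+\frac{n_e\mu_m^2}{1-\mu_b(n_e-1)},$$ and for all $i$ $$\|\tilde{\mathbf{a}}_i\|_2^2\ge1-\frac{n_e\mu_m^2}{1-\mu_b(n_e-1)}.$$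
   Context: Coherence parameters: $\mu_a=\max_{k\ne\ell}|\mathbf{a}_k^H\mathbf{a}_\ell|$, $\mu_b=\max_{k\ne\ell}|\mathbf{b}_k^H\mathbf{b}_\ell|$, $\mu_m=\max_{k,\ell}|\mathbf{a}_k^H\mathbf{b}_\ell|$. $\mathbf{B}_{\mathcal{E}}$ is the column submatrix of $\mathbf{B}$ indexed by $\mathcal{E}$; $\mathbf{M}^\dagger=(\mathbf{M}^H\mathbf{M})^{-1}\mathbf{M}^H$. *)

(* Defs.v *)
(* Complex scalars: an arbitrary numClosedFieldType C
   (e.g. algC); conjugation is Num.conj (notation x^* ). *)
From HB Require Import structures.
From mathcomp Require Import all_boot all_order all_algebra.
Set Implicit Arguments. Unset Strict Implicit. Unset Printing Implicit Defensive.
Import Order.TTheory GRing.Theory Num.Theory.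
Local Open Scope ring_scope.

Section Defs.
Variable C : numClosedFieldType.

Definition adjmx (m n : nat) (A : 'M[C]_(m, n)) : 'M[C]_(n, m) :=
  (map_mx (fun x => x^*) A)^T.

Definition cinner (m : nat) (u v : 'cV[C]_m) : C :=
  \sum_(i < m) (u i 0)^* * v i 0.

Definition normsq (m : nat) (u : 'cV[C]_m) : C := \sum_(i < m) `|u i 0| ^+ 2.

(* binary maximum (used on nonnegative reals in C) *)
Definition cmax (x y : C) : C := if x <= y then y else x.

(* mu_a = max_{k<>l} |a_k^H a_l|  (0 if fewer than two columns) *)
Definition mutual_coh (m n : nat) (A : 'M[C]_(m, n)) : C :=
  \big[cmax/0]_(k < n) \big[cmax/0]_(l < n | k != l)
     `|cinner (col k A) (col l A)|.

Definition cross_coh (m na nb : nat) (A : 'M[C]_(m, na)) (B : 'M[C]_(m, nb)) : C :=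
  \big[cmax/0]_(k < na) \big[cmax/0]_(l < nb) `|cinner (col k A) (col l B)|.

Definition unit_cols (m n : nat) (A : 'M[C]_(m, n)) : Prop :=
  forall k : 'I_n, normsq (col k A) = 1.

(* B_E: columns of B indexed by E (in increasing order) *)
Definition subcols (m n : nat) (B : 'M[C]_(m, n)) (E : {set 'I_n}) : 'M[C]_(m, #|E|) :=
  colsub (fun j : 'I_#|E| => @enum_val _ (pred_of_set E) j) B.

(* Moore-Penrose pseudo-inverse for full column rank: (M^H M)^{-1} M^H *)
Definition pinvH (m n : nat) (Mx : 'M[C]_(m, n)) : 'M[C]_(n, m) :=
  invmx (adjmx Mx *m Mx) *m adjmx Mx.

Definition projR (m n : nat) (B : 'M[C]_(m, n)) (E : {set 'I_n}) : 'M[C]_m :=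
  1%:M - subcols B E *m pinvH (subcols B E).

End Defs.

(* Main.v *)
Require Import Defs.
From HB Require Import structures.
From mathcomp Require Import all_boot all_order all_algebra ring.
Import Order.TTheory GRing.Theory Num.Theory.
Local Open Scope ring_scope.
Set Implicit Arguments. Unset Strict Implicit.
Section Aux.
Variable C : numClosedFieldType.

Lemma cinnerE m (u v : 'cV[C]_m) : cinner u v = (adjmx u *m v) 0 0.
Proof. by rewrite /cinner mxE; apply: eq_bigr => k _; rewrite /adjmx !mxE. Qed.

Lemma adjmxM m n p (A : 'M[C]_(m, n)) (B : 'M[C]_(n, p)) :
  adjmx (A *m B) = adjmx B *m adjmx A.
Proof. by rewrite /adjmx (map_mxM Num.conj_op) trmx_mul. Qed.

Lemma adjmxK m n (A : 'M[C]_(m, n)) : adjmx (adjmx A) = A.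
Proof. by apply/matrixP => i j; rewrite /adjmx !mxE /= (@conjCK C). Qed.

Lemma adjmxB m n (A B : 'M[C]_(m, n)) : adjmx (A - B) = adjmx A - adjmx B.
Proof. by apply/matrixP => i j; rewrite /adjmx !mxE rmorphB. Qed.

Lemma adjmx1 n : adjmx (1%:M : 'M[C]_n) = 1%:M.
Proof. by rewrite /adjmx (map_mx1 Num.conj_op) trmx1. Qed.

Lemma adjmx_inv n (A : 'M[C]_n) : adjmx (invmx A) = invmx (adjmx A).
Proof. by rewrite /adjmx (map_invmx Num.conj_op) trmx_inv. Qed.

Lemma cinner_conj m (u v : 'cV[C]_m) : cinner v u = (cinner u v)^*.
Proof.
rewrite /cinner rmorph_sum; apply: eq_bigr => k _.
by rewrite rmorphM /= conjCK mulrC.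
Qed.

Lemma cmax_ge (x y : C) : 0 <= x -> 0 <= y -> x <= cmax x y /\ y <= cmax x y.
Proof.
move=> hx hy; rewrite /cmax; case: ifP => h; first by split.
split => //; move/negbT: h; rewrite real_leNgt ?ger0_real // negbK.
by move/ltW.
Qed.

Lemma bigcmax_ge (I : eqType) (r : seq I) (P : pred I) (F : I -> C) :
  (forall i, 0 <= F i) ->
  0 <= \big[@cmax C/0]_(i <- r | P i) F i /\
  forall i, i \in r -> P i -> F i <= \big[@cmax C/0]_(i <- r | P i) F i.
Proof.
move=> hF; elim: r => [|a r [IH0 IH]]; first by rewrite big_nil.
rewrite big_cons; case: ifP => Pa.
  have [h1 h2] := cmax_ge (hF a) IH0.
  split; first exact: le_trans (hF a) h1.
  move=> i; rewrite in_cons => /orP [/eqP -> _ //|ir Pi].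
  exact: le_trans (IH i ir Pi) h2.
split => // i; rewrite in_cons => /orP [/eqP -> | ir Pi]; first by rewrite Pa.
exact: IH.
Qed.

Lemma bigcmax_ge0 (I : eqType) (r : seq I) (P : pred I) (F : I -> C) :
  (forall i, 0 <= F i) -> 0 <= \big[@cmax C/0]_(i <- r | P i) F i.
Proof. by move=> h; case: (bigcmax_ge r P h). Qed.

Lemma mutual_coh_ge0 m n (A : 'M[C]_(m, n)) : 0 <= mutual_coh A.
Proof.
rewrite /mutual_coh; apply: bigcmax_ge0 => k.
by apply: bigcmax_ge0 => l.
Qed.

Lemma mutual_coh_ge m n (A : 'M[C]_(m, n)) k l : k != l ->
  `|cinner (col k A) (col l A)| <= mutual_coh A.
Proof.
move=> kl; rewrite /mutual_coh.
have H1 := proj2 (@bigcmax_ge _ (index_enum 'I_n) xpredT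
   (fun k => \big[@cmax C/0]_(l < n | k != l) `|cinner (col k A) (col l A)|)
   (fun i => bigcmax_ge0 _ _ (fun l => normr_ge0 _))).
have H2 := proj2 (@bigcmax_ge _ (index_enum 'I_n) (fun l => k != l)
   (fun l => `|cinner (col k A) (col l A)|) (fun l => normr_ge0 _)).
apply: le_trans (H1 k (mem_index_enum _) isT).
exact: H2 (mem_index_enum _) kl.
Qed.

Lemma cross_coh_ge0 m na nb (A : 'M[C]_(m, na)) (B : 'M[C]_(m, nb)) : 0 <= cross_coh A B.
Proof.
rewrite /cross_coh; apply: bigcmax_ge0 => k.
by apply: bigcmax_ge0 => l.
Qed.

Lemma cross_coh_ge m na nb (A : 'M[C]_(m, na)) (B : 'M[C]_(m, nb)) k l :
  `|cinner (col k A) (col l B)| <= cross_coh A B.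
Proof.
rewrite /cross_coh.
have H1 := proj2 (@bigcmax_ge _ (index_enum 'I_na) xpredT
   (fun k => \big[@cmax C/0]_(l < nb) `|cinner (col k A) (col l B)|)
   (fun i => bigcmax_ge0 _ _ (fun l => normr_ge0 _))).
have H2 := proj2 (@bigcmax_ge _ (index_enum 'I_nb) xpredT
   (fun l => `|cinner (col k A) (col l B)|) (fun l => normr_ge0 _)).
apply: le_trans (H1 k (mem_index_enum _) isT).
exact: H2 (mem_index_enum _) isT.
Qed.

End Aux.
Section Aux2.
Variable C : numClosedFieldType.

Lemma l1_bound n (G : 'M[C]_n) (mu : C) (x : 'cV[C]_n) :
 (forall k, G k k = 1) -> (forall k l, k != l -> `|G k l| <= mu) ->
 (1 - mu * (n%:R - 1)) * \sum_k `|x k 0| <= \sum_k `|(G *m x) k 0|.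
Proof.
move=> Gd Go.
set S := \sum_k `|x k 0|.
have hk : forall k, `|x k 0| <= `|(G *m x) k 0| + mu * (S - `|x k 0|).
  move=> k.
  have -> : S = `|x k 0| + \sum_(l < n | l != k) `|x l 0| by rewrite /S (bigD1 k).
  rewrite (addrC `|x k 0|) addrK.
  have e : (G *m x) k 0 = x k 0 + \sum_(l < n | l != k) G k l * x l 0.
    by rewrite mxE (bigD1 k) //= Gd mul1r.
  have -> : x k 0 = (G *m x) k 0 - \sum_(l < n | l != k) G k l * x l 0.
    by rewrite e addrK.
  apply: le_trans (ler_normB _ _) _.
  rewrite lerD2l; apply: le_trans (ler_norm_sum _ _ _) _.
  rewrite mulr_sumr; apply: ler_sum => l lk; rewrite normrM.
  by apply: ler_wpM2r => //; apply: Go; rewrite eq_sym.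
have hs : S <= \sum_k (`|(G *m x) k 0| + mu * (S - `|x k 0|)) by apply: ler_sum.
rewrite big_split /= -mulr_sumr sumrB sumr_const card_ord in hs.
have -> : (1 - mu * (n%:R - 1)) * S = S - mu * (S *+ n - S).
  by rewrite mulrBl mul1r -mulrA mulrBl mul1r mulr_natl.
by rewrite lerBlDr.
Qed.

Lemma quad_bound n (G : 'M[C]_n) (mu mm : C) (u v : 'cV[C]_n) :
 G \in unitmx -> (forall k, G k k = 1) -> (forall k l, k != l -> `|G k l| <= mu) ->
 0 < 1 - mu * (n%:R - 1) -> 0 <= mm ->
 (forall k, `|u k 0| <= mm) -> (forall k, `|v k 0| <= mm) ->
 `|cinner u (invmx G *m v)| <= n%:R * mm ^+ 2 / (1 - mu * (n%:R - 1)).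
Proof.
move=> GU Gd Go cpos mm0 hu hv.
set c := 1 - _ in cpos *; set x := invmx G *m v.
have Gx : G *m x = v by rewrite /x mulmxA mulmxV // mul1mx.
have h1 := l1_bound x Gd Go; rewrite Gx in h1.
have h2 : \sum_k `|v k 0| <= n%:R * mm.
  apply: le_trans (ler_sum _ (fun k _ => hv k)) _.
  by rewrite sumr_const card_ord mulr_natl.
have h3 : \sum_k `|x k 0| <= n%:R * mm / c.
  by rewrite ler_pdivlMr // mulrC; exact: le_trans h1 h2.
rewrite /cinner; apply: le_trans (ler_norm_sum _ _ _) _.
have h4 : \sum_k `|(u k 0)^* * x k 0| <= mm * \sum_k `|x k 0|.
  rewrite mulr_sumr; apply: ler_sum => k _; rewrite normrM norm_conjC.
  exact: ler_wpM2r.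
apply: le_trans h4 _.
have -> : n%:R * mm ^+ 2 / c = mm * (n%:R * mm / c) by ring.
exact: ler_wpM2l.
Qed.

End Aux2.
Lemma adjmx_entry (C : numClosedFieldType) m n p (X : 'M[C]_(m, n)) (Y : 'M[C]_(m, p)) k l :
  (adjmx X *m Y) k l = cinner (col k X) (col l Y).
Proof. by rewrite /cinner mxE; apply: eq_bigr => i _; rewrite /adjmx !mxE. Qed.

Lemma normsq_cinner (C : numClosedFieldType) m (u : 'cV[C]_m) : normsq u = cinner u u.
Proof. by rewrite /normsq /cinner; apply: eq_bigr => i _; rewrite normCK mulrC. Qed.

Lemma col_mulmx (C : numClosedFieldType) m n p (X : 'M[C]_(m, n)) (Y : 'M[C]_(n, p)) i :
  col i (X *m Y) = X *m col i Y.
Proof. by rewrite !colE mulmxA. Qed.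

Theorem mainTheorem9 (C : numClosedFieldType) (M Na Nb : nat)
  (A : 'M[C]_(M, Na)) (B : 'M[C]_(M, Nb)) (E : {set 'I_Nb}) :
  unit_cols A -> unit_cols B ->
  0 < 1 - mutual_coh B * (#|E|%:R - 1) ->
  let At := projR B E *m A in
  let bnd := #|E|%:R * cross_coh A B ^+ 2 / (1 - mutual_coh B * (#|E|%:R - 1)) in
  (forall i j : 'I_Na, i != j ->
     `|cinner (col i At) (col j At)| <= mutual_coh A + bnd) /\
  (forall i : 'I_Na, 1 - bnd <= normsq (col i At)).
Proof.
move=> hA hB hc At bnd.
set n := #|E| in hc bnd *.
set Bs := subcols B E.
set G := adjmx Bs *m Bs.
have colBs : forall k, col k Bs = col (enum_val k) B by move=> k; rewrite col_colsub.
have Gd : forall k, G k k = 1.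
  by move=> k; rewrite /G adjmx_entry colBs -normsq_cinner hB.
have Go : forall k l, k != l -> `|G k l| <= mutual_coh B.
  move=> k l kl; rewrite /G adjmx_entry !colBs; apply: mutual_coh_ge.
  by rewrite (inj_eq enum_val_inj).
have GU : G \in unitmx.
  rewrite -unitmx_tr -row_free_unit; apply: inj_row_free => v hv.
  have h0 : G *m v^T = 0 by rewrite -[G]trmxK -trmx_mul hv trmx0.
  have h1 := l1_bound (v^T) Gd Go; rewrite h0 in h1.
  have hS : \sum_k `|v^T k 0| = 0.
    apply/eqP; rewrite eq_le sumr_ge0 // andbT.
    have : (1 - mutual_coh B * (n%:R - 1)) * \sum_k `|v^T k 0| <= 0.
      by apply: le_trans h1 _; rewrite big1 // => k _; rewrite mxE normr0.
    by rewrite pmulr_rle0.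
  apply/matrixP => i j; rewrite (ord1 i) mxE.
  move/eqP: hS; rewrite psumr_eq0 // => /allP /(_ j (mem_index_enum _)).
  by rewrite mxE normr_eq0 => /eqP.
have GH : adjmx G = G by rewrite /G adjmxM adjmxK.
set P := Bs *m (invmx G *m adjmx Bs).
have PH : adjmx P = P by rewrite /P !adjmxM adjmx_inv GH adjmxK mulmxA.
have PP : P *m P = P.
  rewrite /P -[in RHS](mul1mx (invmx G)) -(mulVmx GU) /G.
  by rewrite !mulmxA.
have RE : projR B E = 1%:M - P by [].
have RH : adjmx (projR B E) = projR B E by rewrite RE adjmxB adjmx1 PH.
have RR : projR B E *m projR B E = projR B E.
  by rewrite RE mulmxBl mul1mx mulmxBr mulmx1 PP subrr subr0.
have key : forall a b : 'cV_M, cinner (projR B E *m a) (projR B E *m b)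
   = cinner a b - cinner (adjmx Bs *m a) (invmx G *m (adjmx Bs *m b)).
  move=> a b; rewrite !cinnerE adjmxM RH -mulmxA (mulmxA (projR B E)) RR.
  rewrite RE mulmxBl mul1mx mulmxBr.
  have -> : forall X Y : 'M[C]_1, (X - Y) 0 0 = X 0 0 - Y 0 0 by move=> X Y; rewrite !mxE.
  congr (_ - _).
  by rewrite adjmxM adjmxK /P !mulmxA.
have hu : forall i k, `|(adjmx Bs *m col i A) k 0| <= cross_coh A B.
  move=> i k; rewrite adjmx_entry colBs cinner_conj norm_conjC.
  have -> : col 0 (col i A) = col i A by apply/matrixP => a b; rewrite !mxE.
  exact: cross_coh_ge.
have hq : forall i j, `|cinner (adjmx Bs *m col i A) (invmx G *m (adjmx Bs *m col j A))| <= bnd.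
  move=> i j; exact: (quad_bound GU Gd Go hc (cross_coh_ge0 A B) (hu i) (hu j)).
split.
  move=> i j ij; rewrite /At !col_mulmx key.
  apply: le_trans (ler_normB _ _) _; apply: lerD; first exact: mutual_coh_ge.
  exact: hq.
move=> i; rewrite /At col_mulmx normsq_cinner key -normsq_cinner hA.
rewrite lerD2l lerN2.
set T := cinner _ _.
have Tr : T \is Num.real.
  have -> : T = 1 - normsq (col i At).
    by rewrite /At col_mulmx normsq_cinner key -normsq_cinner hA opprB addrC subrK.
  rewrite realB ?real1 // ger0_real // /normsq; apply: sumr_ge0 => k _; exact: exprn_ge0.
exact: le_trans (real_ler_norm Tr) (hq i i).
Qed.
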